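(* Let $n\ge 1$ and let $\mathbf{s}=[s_1,\dots,s_n]^T\in\mathbb{R}^n$ have pairwise distinct entries. Let $A_{\mathbf{s}}\in\mathbb{R}^{n\times n}$ be given by $A_{\mathbf{s}}[i,j]=|s_i-s_j|$, and let $\mathbb{1}\in\mathbb{R}^n$ be the all-ones column vector. Then for every $i,j\in\{1,\dots,n\}$, $$P_{\mathrm{sort}(\mathbf{s})}[i,j]=\begin{cases}1 & \text{if } j=\arg\max\big[(n+1-2i)\mathbf{s}-A_{\mathbf{s}}\mathbb{1}\big],\\ 0 & \text{otherwise,}\end{cases}$$ where the $\arg\max$ is taken over the $n$ coordinates of the vector $(n+1-2i)\mathbf{s}-A_{\mathbf{s}}\mathbb{1}$ (whose $j$-th coordinate is $(n+1-2i)s_j-\sum_{k=1}^n|s_j-s_k|$), and this maximizer is unique.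
   Context: A permutation $\mathbf{z}=[z_1,\dots,z_n]^T$ of $\{1,\dots,n\}$ has permutation matrix $P_{\mathbf{z}}\in\{0,1\}^{n\times n}$ with $P_{\mathbf{z}}[i,j]=1$ iff $j=z_i$. For $\mathbf{s}\in\mathbb{R}^n$, $\mathrm{sort}(\mathbf{s})$ is the permutation listing the indices of $\mathbf{s}$ in order of decreasing value: $z_1$ is the index of the largest entry, $z_2$ the index of the second largest, and so on (e.g. $\mathrm{sort}([9,1,5,2]^T)=[1,3,4,2]^T$). *)

(* Defs.v *)
From mathcomp Require Import all_boot all_order all_algebra.
Set Implicit Arguments. Unset Strict Implicit. Unset Printing Implicit Defensive.
Import Order.TTheory GRing.Theory Num.Theory.
Local Open Scope ring_scope.

(* Indices 1..n of the paper are represented by 'I_n = {0,..,n-1}. *)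

Definition srank (R : realFieldType) (n : nat) (s : 'I_n -> R) (j : 'I_n) : nat :=
  #|[set k : 'I_n | s j < s k]|.

(* sort(s): z i = index of the (i+1)-th largest entry of s (0-based i).
   For s with pairwise distinct entries there is exactly one such index;
   the default (i itself) is never used in that case. *)
Definition sort_perm (R : realFieldType) (n : nat) (s : 'I_n -> R) (i : 'I_n) : 'I_n :=
  odflt i [pick j : 'I_n | srank s j == i].

Definition perm_matrix (R : realFieldType) (n : nat) (z : 'I_n -> 'I_n) : 'M[R]_n :=
  \matrix_(i, j) (if j == z i then 1 else 0).

Definition distmx (R : realFieldType) (n : nat) (s : 'I_n -> R) : 'M[R]_n :=
  \matrix_(i, j) `|s i - s j|.

Definition colvec (R : realFieldType) (n : nat) (s : 'I_n -> R) : 'cV[R]_n :=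
  \col_j s j.

(* the vector (n + 1 - 2i) s - A_s 1, for the paper's 1-based row index
   i = i0 + 1 with i0 : 'I_n; so n + 1 - 2i = n - 1 - 2 i0. *)
Definition sortvec (R : realFieldType) (n : nat) (s : 'I_n -> R) (i0 : 'I_n) : 'cV[R]_n :=
  ((n%:R + 1 - 2 * (i0.+1)%:R) *: colvec s) - distmx s *m const_mx 1.

Definition is_unique_argmax (R : realFieldType) (n : nat) (v : 'cV[R]_n) (j : 'I_n) : bool :=
  [forall k : 'I_n, (k != j) ==> (v k 0 < v j 0)].

(* Main.v *)
Require Import Defs.
From mathcomp Require Import all_boot all_order all_algebra.
From mathcomp Require Import lra.
Import Order.TTheory GRing.Theory Num.Theory.
Local Open Scope ring_scope.
Set Implicit Arguments.

Section S.
Variables (R : realFieldType) (n : nat) (s : 'I_n -> R).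

Lemma sum_bound (B : {set 'I_n}) (h : 'I_n -> R) d :
  (forall l, h l <= d) -> (forall l, l \in B -> h l = -d) ->
  \sum_l h l <= (#|~: B|%:R - #|B|%:R) * d.
Proof.
move=> hle hB; rewrite (bigID (mem B)) /=.
rewrite [X in X + _](eq_bigr (fun _ => -d)); last by move=> l /hB.
have -> : \sum_(l | l \in B) (-d) = - (#|B|%:R * d).
  by rewrite sumr_const mulNrn mulr_natl.
have : \sum_(l | l \notin B) h l <= #|~: B|%:R * d.
  apply: le_trans (_ : \sum_(l in ~: B) d <= _).
    rewrite (eq_bigl (fun l => l \in ~: B)); last by move=> l; rewrite in_setC.
    by apply: ler_sum.
  by rewrite sumr_const mulr_natl.
move=> H; rewrite mulrBl; lra.
Qed.

Definition vv (c : R) (x : 'I_n) := c * s x - \sum_l `|s x - s l|.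

Lemma sortvecE (i j : 'I_n) :
  sortvec s i j 0 = vv (n%:R + 1 - 2 * (i.+1)%:R) j.
Proof.
rewrite /sortvec /vv !mxE; congr (_ - _).
by apply: eq_bigr => l _; rewrite !mxE mulr1.
Qed.

Definition Aset (j : 'I_n) := [set k : 'I_n | s j < s k].

Lemma key (i j k : 'I_n) : injective s -> srank s j = i -> k != j ->
  vv (n%:R + 1 - 2 * (i.+1)%:R) k < vv (n%:R + 1 - 2 * (i.+1)%:R) j.
Proof.
move=> inj hr nkj.
have hcard : #|Aset j| = i by [].
have hs : s k != s j by apply: contra nkj => /eqP /inj ->.
rewrite /vv.
set c := (n%:R + 1 - 2 * (i.+1)%:R).
have hsum : \sum_l `|s j - s l| - \sum_l `|s k - s l| = \sum_l (`|s j - s l| - `|s k - s l|) by rewrite sumrB.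
have tri : forall l, `|s j - s l| - `|s k - s l| <= `|s j - s k|.
  move=> l; rewrite lerBlDr.
  by apply: le_trans (ler_normD _ _); rewrite addrA subrK.
have nat_i : (i.+1)%:R = (i%:R : R) + 1 by rewrite -natr1.
case: (ltrgtP (s k) (s j)) => hkj; last by rewrite hkj eqxx in hs.
-
  pose B := j |: Aset j.
  have hB : forall l, l \in B -> `|s j - s l| - `|s k - s l| = - `|s j - s k|.
    move=> l; rewrite !inE => /orP [/eqP -> | hl].
      by rewrite subrr normr0 sub0r distrC.
    rewrite (ler0_norm (ltW _)) ?subr_lt0 // (ler0_norm (ltW _)) ?subr_lt0 //; last by apply: lt_trans hl.
    rewrite (gtr0_norm _) ?subr_gt0 //; lra.
  have := @sum_bound B _ _ tri hB.
  have cB : #|B| = i.+1 by rewrite cardsU1 inE ltxx hcard.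
  have cT : (#|~: B| + #|B|)%N = n by rewrite addnC cardsC card_ord.
  have cT' : (#|~: B|%:R : R) + #|B|%:R = n%:R by rewrite -natrD cT.
  rewrite cB in cT' * => H.
  rewrite (gtr0_norm _) ?subr_gt0 // in H.
  move: cT' H; rewrite /c nat_i.
  set N := (n%:R : R); set a := (i%:R : R); set b := (#|~: B|%:R : R).
  set S := \sum_l _.
  move=> cT' H.
  have -> : N = b + (a + 1) by rewrite -cT'.
  move: hsum; rewrite -/S => hsum.
  nra.
-
  pose B := ~: Aset j.
  have hB : forall l, l \in B -> `|s j - s l| - `|s k - s l| = - `|s j - s k|.
    move=> l; rewrite !inE -leNgt => hl.
    rewrite (ger0_norm _) ?subr_ge0 // (ger0_norm _) ?subr_ge0 //; last by apply: le_trans (ltW hkj).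
    rewrite (ltr0_norm _) ?subr_lt0 //; lra.
  have := @sum_bound B _ _ tri hB.
  have cT : (#|~: B| + #|B|)%N = n by rewrite addnC cardsC card_ord.
  have cT' : (#|~: B|%:R : R) + #|B|%:R = n%:R by rewrite -natrD cT.
  rewrite /B setCK hcard in cT' * => H.
  rewrite (ltr0_norm _) ?subr_lt0 // in H.
  move: cT' H; rewrite /c nat_i.
  set N := (n%:R : R); set a := (i%:R : R); set b := (#|~: Aset j|%:R : R).
  set S := \sum_l _.
  move=> cT' H.
  have -> : N = a + b by rewrite -cT'.
  move: hsum; rewrite -/S => hsum.
  nra.
Qed.

Lemma srank_lt (j : 'I_n) : (0 < n)%N -> (srank s j < n)%N.
Proof.
move=> n0; rewrite /srank.
have : [set k : 'I_n | s j < s k] \subset [set~ j].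
  by apply/subsetP => k; rewrite !inE; apply: contraTneq => ->; rewrite ltxx.
move/subset_leq_card; rewrite cardsC1 card_ord => h.
by apply: leq_ltn_trans h _; rewrite prednK.
Qed.

Lemma srank_lt2 (j k : 'I_n) : s j < s k -> (srank s k < srank s j)%N.
Proof.
move=> hjk; apply: proper_card; apply/properP; split.
  apply/subsetP => l; rewrite !inE => hl; exact: lt_trans hl.
by exists k; rewrite !inE ?ltxx.
Qed.

Lemma srank_inj : injective s -> injective (srank s).
Proof.
move=> inj j k h; apply/eqP; apply/negPn/negP => njk.
have : s j != s k by apply: contra njk => /eqP/inj ->.
rewrite neq_lt => /orP [] /srank_lt2; by rewrite h ltnn.
Qed.
End S.

Theorem corollary1 (R : realFieldType) (n : nat) (s : 'I_n -> R) :
  (0 < n)%N -> injective s ->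
  forall i : 'I_n,
    (exists j : 'I_n, is_unique_argmax (sortvec s i) j) /\
    (forall j : 'I_n,
       perm_matrix R (sort_perm s) i j
       = (if is_unique_argmax (sortvec s i) j then 1 else 0)).
Proof.
move=> n0 inj i.
pose f (j : 'I_n) : 'I_n := Ordinal (@srank_lt _ _ s j n0).
have finj : injective f.
  by move=> a b /(congr1 val) /= /(srank_inj inj).
have [g fg gf] := injF_bij finj.
pose j0 := g i.
have hj0 : srank s j0 = i by rewrite -[RHS](congr1 val (gf i)).
have sp : sort_perm s i = j0.
  rewrite /sort_perm; case: pickP => [j /eqP hj | none] /=.
    by apply: (srank_inj inj); rewrite hj hj0.
  by have := none j0; rewrite hj0 eqxx.
have ua : forall j, is_unique_argmax (sortvec s i) j = (j == j0).
  move=> j; case: eqP => [-> | nj].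
    apply/forallP => k; apply/implyP => nk.
    by rewrite !sortvecE; apply: key.
  apply/negP => /forallP /(_ j0) /implyP.
  have nj' : j0 != j by apply/eqP => h; apply: nj; rewrite h.
  move=> /(_ nj'); rewrite !sortvecE => h.
  have := @key _ _ s _ _ _ inj hj0 (introN eqP nj).
  by rewrite ltNge (ltW h).
split; first by exists j0; rewrite ua.
by move=> j; rewrite /perm_matrix mxE sp ua.
Qed.
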